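(* In the standing setup with $A$ generic, let $g_i=B_i^{\rm T}f_0$ ($i=1,2,3$) and for $\varepsilon\ne 0$ let $\widetilde H(x,\varepsilon)=\varepsilon^{-1}x^{\rm T}J(I-\varepsilon f_0'(x))^{-1}x$ and $\widetilde K_i(x,\varepsilon)=\varepsilon^{-1}x^{\rm T}J(I-\varepsilon g_i'(x))^{-1}x$. Then $\widetilde K_1+\widetilde K_2+\widetilde K_3=\widetilde H$.
   Context: Standing setup: $J=\begin{pmatrix}0&I_3\\-I_3&0\end{pmatrix}$ ($6\times6$). $A$ is a fixed real $6\times 6$ skew-Hamiltonian matrix ($A^{\rm T}J=JA$). $H_0$ is a homogeneous cubic polynomial on $\mathbb R^6$ with $A\nabla^2H_0(x)=\nabla^2H_0(x)A^{\rm T}$ for all $x$ ($\nabla^2$ = Hesse matrix), $H_1,H_2$ homogeneous cubic polynomials with $\nabla H_1=A\nabla H_0$, $\nabla H_2=A\nabla H_1$, $f_i=J\nabla H_i$, primes denote Jacobi matrices. Genericity: the characteristic polynomial of $A$ (a square of a cubic) has three pairwise distinct roots $\lambda_1,\lambda_2,\lambda_3$, each a double eigenvalue. $B_i=\alpha_iI+\beta_iA+\gamma_iA^2$ ($i=1,2,3$), where $\alpha_i+\beta_i\lambda+\gamma_i\lambda^2$ is the unique polynomial of degree $\le2$ equal to $-1$ at $\lambda_i$ and to $1$ at the other two eigenvalues; then $B_i^2=I$ and $B_1+B_2+B_3=I$. *)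

(* Defs.v *)
From HB Require Import structures.
From mathcomp Require Import all_boot all_order all_algebra.
Set Implicit Arguments. Unset Strict Implicit. Unset Printing Implicit Defensive.
Import Order.TTheory GRing.Theory Num.Theory.
Local Open Scope ring_scope.

Section Defs.
Variable R : numFieldType.

Definition Jmx : 'M[R]_6 := block_mx (0 : 'M_3) 1%:M (- 1%:M) 0.

(* A homogeneous cubic polynomial on R^6 is represented by a coefficient
   tensor c: H(x) = sum_{i,j,k} c i j k x_i x_j x_k (every homogeneous cubic
   has such a representation). *)
Definition cubic := 'I_6 -> 'I_6 -> 'I_6 -> R.

Definition cubic_eval (c : cubic) (x : 'cV[R]_6) : R :=
  \sum_i \sum_j \sum_k c i j k * x i 0 * x j 0 * x k 0.

Definition cubic_grad (c : cubic) (x : 'cV[R]_6) : 'cV[R]_6 :=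
  \col_a \sum_j \sum_k (c a j k + c j a k + c j k a) * x j 0 * x k 0.

Definition cubic_hess (c : cubic) (x : 'cV[R]_6) : 'M[R]_6 :=
  \matrix_(a, b) \sum_k (c a b k + c a k b + c b a k + c k a b + c b k a + c k b a)
                        * x k 0.

Definition vf (c : cubic) (x : 'cV[R]_6) : 'cV[R]_6 := Jmx *m cubic_grad c x.
Definition vf_jac (c : cubic) (x : 'cV[R]_6) : 'M[R]_6 := Jmx *m cubic_hess c x.

(* Jacobi matrix of g = B^T f0 (B constant): B^T f0'. *)
Definition gvf_jac (B : 'M[R]_6) (c : cubic) (x : 'cV[R]_6) : 'M[R]_6 :=
  B^T *m vf_jac c x.

Definition kahan_mod (M : 'M[R]_6) (x : 'cV[R]_6) (eps : R) : R :=
  eps^-1 * (x^T *m Jmx *m invmx (1%:M - eps *: M) *m x) 0 0.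

Definition Htilde (c : cubic) (x : 'cV[R]_6) (eps : R) : R :=
  kahan_mod (vf_jac c x) x eps.
Definition Ktilde (B : 'M[R]_6) (c : cubic) (x : 'cV[R]_6) (eps : R) : R :=
  kahan_mod (gvf_jac B c x) x eps.

End Defs.

(* Main.v *)
Require Import Defs.
From HB Require Import structures.
From mathcomp Require Import all_boot all_order all_algebra.
From mathcomp Require Import ring.
Import Order.TTheory GRing.Theory Num.Theory.
Local Open Scope ring_scope.

Lemma trN (F : numFieldType) m n (A : 'M[F]_(m, n)) : (- A)^T = - A^T.
Proof. by apply/matrixP => i j; rewrite !mxE. Qed.
Lemma trD (F : numFieldType) m n (A B : 'M[F]_(m, n)) : (A + B)^T = A^T + B^T.
Proof. by apply/matrixP => i j; rewrite !mxE. Qed.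
Lemma trB (F : numFieldType) m n (A B : 'M[F]_(m, n)) : (A - B)^T = A^T - B^T.
Proof. by apply/matrixP => i j; rewrite !mxE. Qed.
Lemma trZ (F : numFieldType) m n a (A : 'M[F]_(m, n)) : (a *: A)^T = a *: A^T.
Proof. by apply/matrixP => i j; rewrite !mxE. Qed.

Lemma skew_rank_even (F : numFieldType) n (K : 'M[F]_n) :
  K^T = - K -> ~~ odd (\rank K).
Proof.
move=> Ksk.
pose C := col_base K. pose Bb := row_base K.
have KCB : C *m Bb = K by exact: mulmx_base.
have CTfree : row_free C^T.
  by rewrite /row_free mxrank_tr; have := col_base_full K; rewrite /row_full.
have sBK : (Bb <= K)%MS by have /eqmxP/andP[] := eq_row_base K.
have sKC : (K <= C^T)%MS.
  have h1 : ((C *m Bb)^T <= C^T)%MS by rewrite trmx_mul submxMl.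
  rewrite KCB Ksk eqmx_opp in h1; exact: h1.
have sB := submx_trans sBK sKC.
pose G := Bb *m pinvmx C^T.
have BG : G *m C^T = Bb by rewrite mulmxKpV.
have KG : C *m G *m C^T = K by rewrite -mulmxA BG.
clearbody G C Bb.
have GG : G^T = - G.
  have e : C *m G^T *m C^T = C *m (- G) *m C^T.
    by rewrite -[C in LHS]trmxK -!trmx_mul trmxK mulmxA KG Ksk mulmxN mulNmx KG.
  have e2 := row_free_inj CTfree e.
  have e3 : G *m C^T = (- G^T) *m C^T.
    by apply: trmx_inj; rewrite !trmx_mul trmxK e2 trN trmxK.
  by rewrite {2}(row_free_inj CTfree e3) opprK.
have rG : \rank G = \rank K.
  have h := mxrankM_maxl (C *m G) C^T; rewrite KG in h.
  have h2 := mxrankM_maxr C G.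
  by apply: anti_leq; rewrite rank_leq_row (leq_trans h h2).
have Gu : G \in unitmx by rewrite -row_free_unit /row_free rG.
apply/negP => oddr.
have : \det G = - \det G.
  by rewrite -[LHS]det_tr GG -scaleN1r detZ -signr_odd oddr expr1 mulN1r.
move/eqP; rewrite -subr_eq0 opprK -mulr2n mulrn_eq0 /=.
by move: Gu; rewrite unitmxE unitfE => /negbTE ->.
Qed.

Lemma eig_rank (R : numFieldType) (A J : 'M[R]_6) a :
  J \in unitmx -> J^T = - J -> A^T *m J = J *m A -> eigenvalue A a ->
  (2 <= \rank (eigenspace A a))%N.
Proof.
move=> Ju Jsk hA ev.
have Jfull : row_full J by rewrite row_full_unit.
have rk : \rank (J *m (A - a%:M)) = \rank (A - a%:M).
  by rewrite (eqmxMfull _ Jfull).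
have sk : (J *m (A - a%:M))^T = - (J *m (A - a%:M)).
  rewrite trmx_mul trB tr_scalar_mx Jsk mulmxN mulmxBl hA.
  by rewrite mulmxBr scalar_mxC.
have ev' := @skew_rank_even _ _ _ sk; rewrite rk in ev'.
have : \rank (eigenspace A a) != 0%N by rewrite mxrank_eq0.
rewrite /eigenspace mxrank_ker in ev' *.
move: ev' (rank_leq_row (A - a%:M)).
move: (\rank (A - a%:M)) => r.
by case: r => [|[|[|[|[|[|[|r]]]]]]].
Qed.

Lemma minpoly_zero (R : numFieldType) (A J : 'M[R]_6) (l1 l2 l3 : R) :
  J \in unitmx -> J^T = - J -> A^T *m J = J *m A ->
  char_poly A = (('X - l1%:P) * ('X - l2%:P) * ('X - l3%:P)) ^+ 2 ->
  l1 != l2 -> l1 != l3 -> l2 != l3 ->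
  forall p : {poly R}, p.[l1] = 0 -> p.[l2] = 0 -> p.[l3] = 0 ->
  horner_mx A p = 0.
Proof.
move=> Ju Jsk hA hchar h12 h13 h23 p r1 r2 r3.
pose rs := [:: l1; l2; l3].
pose a_ := fun i : 'I_3 => rs`_i.
have ainj : {in predT &, injective a_}.
  move=> [[|[|[|i]]] hi] [[|[|[|j]]] hj] _ _ //; rewrite /a_ /= => e;
    first [by apply: val_inj | by move: h12 h13 h23; rewrite e !eqxx].
have ev : forall i, eigenvalue A (a_ i).
  move=> i; rewrite eigenvalue_root_char /root hchar !hornerE.
  by case: i => [[|[|[|i]]] hi] //=; rewrite /a_ /= sqrf_eq0 !mulf_eq0 subrr eqxx ?orbT.
have dir := mxdirect_sum_eigenspace A ainj.
have rk : \rank (\sum_(i < 3 | predT i) eigenspace A (a_ i)) = 6%N.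
  apply/anti_leq; rewrite rank_leq_col /=.
  move/mxdirectP: dir => /= ->.
  have h : (\sum_(i < 3) 2 <= \sum_(i < 3) \rank (eigenspace A (a_ i)))%N.
    by apply: leq_sum => i _; exact: (@eig_rank _ _ _ _ Ju Jsk hA (ev i)).
  rewrite sum_nat_const card_ord in h.
  exact: h.
have full : (1%:M <= \sum_(i < 3 | predT i) eigenspace A (a_ i))%MS.
  by apply: submx_full; rewrite /row_full rk.
pose m := \prod_(i < 3 | predT i) ('X - (a_ i)%:P).
have cop : {in predT &, forall i j, j != i ->
    coprimep ('X - (a_ i)%:P) ('X - (a_ j)%:P)}.
  move=> i j _ _ nji; rewrite coprimep_XsubC root_XsubC.
  by apply: contra nji => /eqP /ainj -> //.
have hm : horner_mx A m = 0.
  have : (1%:M <= kermxpoly A m)%MS.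
    rewrite (kermxpoly_prod A cop).
    by rewrite (eq_bigr _ (fun i _ => esym (eigenspace_poly (a_ i) A))).
  by move/sub_kermxP; rewrite mul1mx.
have dm : m %| p.
  have e : m = \prod_(z <- rs) ('X - z%:P).
    by rewrite (big_nth 0) big_mkord.
  rewrite e; apply: uniq_roots_dvdp.
    by rewrite /= /root r1 r2 r3 eqxx.
  rewrite uniq_rootsE /= !inE negb_or h12 h13 h23.
  done.
case/dvdpP: dm => q ->.
by rewrite rmorphM /= hm mulr0.
Qed.

Set Implicit Arguments. Unset Strict Implicit.

Lemma invmx_comm (R : numFieldType) (Z X : 'M[R]_6) :
  Z \in unitmx -> Z *m X = X *m Z -> invmx Z *m X = X *m invmx Z.
Proof.
move=> Zu e.
rewrite -[LHS]mulmx1 -(mulmxV Zu) !mulmxA -[invmx Z *m X *m Z]mulmxA -e.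
by rewrite mulmxA mulVmx // mul1mx.
Qed.

Lemma qD (R : numFieldType) (x : 'cV[R]_6) (M N : 'M[R]_6) :
  (x^T *m (M + N) *m x) 0 0 = (x^T *m M *m x) 0 0 + (x^T *m N *m x) 0 0.
Proof. by rewrite mulmxDr mulmxDl mxE. Qed.
Lemma qN (R : numFieldType) (x : 'cV[R]_6) (M : 'M[R]_6) :
  (x^T *m (- M) *m x) 0 0 = - (x^T *m M *m x) 0 0.
Proof. by rewrite mulmxN mulNmx mxE. Qed.
Lemma q2 (R : numFieldType) (x : 'cV[R]_6) (M : 'M[R]_6) :
  (x^T *m (M *+ 2) *m x) 0 0 = (x^T *m M *m x) 0 0 *+ 2.
Proof. by rewrite !mulr2n qD. Qed.
Lemma qT (R : numFieldType) (x : 'cV[R]_6) (M : 'M[R]_6) :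
  (x^T *m M^T *m x) 0 0 = (x^T *m M *m x) 0 0.
Proof.
have -> : x^T *m M^T *m x = (x^T *m M *m x)^T by rewrite !trmx_mul trmxK mulmxA.
by rewrite mxE.
Qed.

Lemma cancel2 (R : numFieldType) (a b : R) : a *+ 2 = b *+ 2 -> a = b.
Proof.
move/eqP; rewrite -subr_eq0 -mulrnBl mulrn_eq0 /= subr_eq0.
by move/eqP.
Qed.

Lemma mulmx2 (R : numFieldType) (A M : 'M[R]_6) : A *m (M *+ 2) = (A *m M) *+ 2.
Proof. by rewrite !mulr2n mulmxDr. Qed.

Lemma mulmx2l (R : numFieldType) (A M : 'M[R]_6) : (M *+ 2) *m A = (M *m A) *+ 2.
Proof. by rewrite !mulr2n mulmxDl. Qed.

Lemma key (R : numFieldType) (J S B : 'M[R]_6) (x : 'cV[R]_6) (eps : R) :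
  J^T = - J -> J *m J = - 1%:M -> S^T = S -> B *m B = 1%:M ->
  B^T *m J = J *m B -> B *m S = S *m B^T ->
  (1%:M - eps *: (J *m S)) \in unitmx ->
  (1%:M - eps *: (B^T *m (J *m S))) \in unitmx ->
  (x^T *m J *m invmx (1%:M - eps *: (B^T *m (J *m S))) *m x) 0 0
  = (x^T *m (J *m invmx (1%:M - eps *: (J *m S)) *m B^T) *m x) 0 0.
Proof.
move=> Jsk JJ Ssym BB BJ BS Zu Yu.
have BtBt : B^T *m B^T = 1%:M by rewrite -trmx_mul BB trmx1.
have BtC : B^T *m (J *m S) = (J *m S) *m B^T by rewrite mulmxA BJ -mulmxA BS mulmxA.
have JBt : J *m B^T = B *m J.
  have h : J *m B^T *m J = - B by rewrite -mulmxA BJ mulmxA JJ mulNmx mul1mx.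
  by rewrite -[LHS]mulmx1 -[1%:M]opprK -JJ mulmxN mulmxA h mulNmx opprK.
have JBJ : J *m B *m J = - B^T by rewrite -mulmxA -JBt mulmxA JJ mulNmx mul1mx.
have CT : (J *m S)^T = - (S *m J) by rewrite trmx_mul Ssym Jsk mulmxN.
have YT : (1%:M - eps *: (B^T *m (J *m S)))^T = 1%:M + eps *: (S *m J *m B).
  by rewrite trB trmx1 trZ trmx_mul CT trmxK mulNmx scalerN opprK.
set C := J *m S in Zu Yu YT BtC CT *.
have SJC : J *m S = C by [].
clearbody C.
set Z := 1%:M - eps *: C in Zu *.
have Zdef : Z = 1%:M - eps *: C by [].
clearbody Z.
set Y := 1%:M - eps *: (B^T *m C) in Yu YT *.
have Ydef : Y = 1%:M - eps *: (B^T *m C) by [].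
clearbody Y.
pose P := 1%:M - B^T.
have Pdef : P = 1%:M - B^T by [].
clearbody P.
pose Q := 1%:M + B^T.
have Qdef : Q = 1%:M + B^T by [].
clearbody Q.
have PP : P *m P = P *+ 2.
  by rewrite Pdef !mulmxBl !mulmxBr !mul1mx !mulmx1 BtBt opprB mulr2n.
have BtQ : B^T *m Q = Q by rewrite Qdef mulmxDr mulmx1 BtBt addrC.
have BtP : B^T *m P = - P by rewrite Pdef mulmxBr mulmx1 BtBt opprB.
have QB : Q - P = B^T *+ 2 by rewrite Qdef Pdef mulr2n opprB addrC addrA subrK.
have QP : Q + P = 1%:M *+ 2 by rewrite Qdef Pdef mulr2n addrACA subrr addr0.
have CB : forall M, B^T *m M = M *m B^T -> C *m M = M *m C ->
   Z *m M = M *m Z /\ Y *m M = M *m Y.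
  move=> M h1 h2; split.
    by rewrite Zdef mulmxBl mulmxBr mul1mx mulmx1 -scalemxAl -scalemxAr h2.
  rewrite Ydef mulmxBl mulmxBr mul1mx mulmx1 -scalemxAl -scalemxAr.
  by congr (_ - _ *: _); rewrite -mulmxA h2 !mulmxA h1.
have hP : B^T *m P = P *m B^T /\ C *m P = P *m C.
  by rewrite Pdef !mulmxBl !mulmxBr !mul1mx !mulmx1 BtC.
have hQ : B^T *m Q = Q *m B^T /\ C *m Q = Q *m C.
  by rewrite Qdef !mulmxDl !mulmxDr !mul1mx !mulmx1 BtC.
have [ZP YP] := CB P hP.1 hP.2.
have [ZQ YQ] := CB Q hQ.1 hQ.2.
have YQZ : Y *m Q = Z *m Q.
  by rewrite Ydef Zdef !mulmxBl -!scalemxAl BtC -mulmxA BtQ.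
have M1 : invmx Y *m Q = invmx Z *m Q.
  have h : invmx Y *m Q *m Z = Q by rewrite -mulmxA -ZQ -YQZ (mulKmx Yu).
  by rewrite (invmx_comm Zu ZQ) -{2}h (mulmxK Zu).
have PT : P^T = 1%:M - B by rewrite Pdef trB trmx1 trmxK.
have JP : J *m P = P^T *m J.
  by rewrite PT Pdef mulmxBr mulmxBl mulmx1 mul1mx JBt.
have SP : S *m P = P^T *m S.
  by rewrite PT Pdef mulmxBr mulmxBl mulmx1 mul1mx BS.
have f7 : Y^T *m (J *m P) = J *m P *m Z.
  rewrite YT Zdef mulmxDl mulmxBr mul1mx mulmx1.
  rewrite -scalemxAl -scalemxAr -scalerN -SJC.
  congr (_ + _ *: _).
  rewrite -!mulmxA (mulmxA J B) (mulmxA (J *m B) J P) JBJ mulNmx BtP !opprK.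
  rewrite (mulmxA J P) JP mulmxA -(mulmxA P^T J J) JJ mulmxN mulmx1 mulNmx !opprK.
  by rewrite SP.
have Ytu : Y^T \in unitmx by rewrite unitmx_tr.
have f8 : (invmx Y)^T *m (J *m P) = J *m P *m invmx Z.
  by rewrite trmx_inv -[J *m P in RHS](mulKmx Ytu) f7 !mulmxA mulmxK.
have YiP := invmx_comm Yu YP.
have ZiP := invmx_comm Zu ZP.
have TT1 : P^T *m J *m invmx Y *m P = (J *m invmx Y *m P) *+ 2.
  rewrite -JP -(mulmxA J P) -YiP mulmxA -mulmxA PP mulmx2.
  done.
have TT2 : (P^T *m J *m invmx Y *m P)^T = - (J *m invmx Z *m P) *+ 2.
  rewrite !trmx_mul trmxK Jsk mulNmx !mulmxN f8.
  rewrite !mulmxA -JP -(mulmxA J P P) PP mulmx2 mulmx2l -mulmxA -ZiP mulmxA.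
  by rewrite mulNrn.
have e1 : (J *m invmx Y) *+ 2 = J *m invmx Y *m Q + J *m invmx Y *m P.
  by rewrite -mulmxDr QP mulmx2 mulmx1.
have e2 : J *m invmx Y *m Q = J *m invmx Z *m Q by rewrite -!mulmxA M1.
have e3 : (x^T *m (J *m invmx Y *m P) *m x) 0 0
          = - (x^T *m (J *m invmx Z *m P) *m x) 0 0.
  by apply: cancel2; rewrite -q2 -TT1 -qT TT2 q2 qN.
have e4 : J *m invmx Z *m Q - J *m invmx Z *m P = (J *m invmx Z *m B^T) *+ 2.
  by rewrite -mulmxBr QB mulmx2.
apply: cancel2.
rewrite -(mulmxA x^T J) -!q2 e1 qD e2 e3 -qN -qD -e4.
done.
Qed.

Lemma Jsk (R : numFieldType) : (Jmx R)^T = - Jmx R.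
Proof.
have h : (block_mx (0:'M[R]_3) 1%:M (-1%:M) 0)^T =
   - block_mx (0:'M[R]_3) 1%:M (-1%:M) 0.
  by rewrite tr_block_mx opp_block_mx !trmx0 trN trmx1 !oppr0 opprK.
exact: h.
Qed.

Lemma JJ (R : numFieldType) : Jmx R *m Jmx R = - 1%:M.
Proof.
have h : block_mx (0:'M[R]_3) 1%:M (-1%:M) 0 *m block_mx (0:'M[R]_3) 1%:M (-1%:M) 0
   = - 1%:M.
  rewrite mulmx_block !mul0mx !mulmx0 !mul1mx !mulmx1 !add0r !addr0.
  by rewrite (scalar_mx_block 3 3) opp_block_mx !oppr0.
exact: h.
Qed.

Lemma Ju (R : numFieldType) : Jmx R \in unitmx.
Proof.
have h : Jmx R *m (- Jmx R) = 1%:M by rewrite mulmxN JJ opprK.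
by case: (mulmx1_unit h).
Qed.

Lemma hess_sym (R : numFieldType) (c : cubic R) x : (cubic_hess c x)^T = cubic_hess c x.
Proof.
apply/matrixP => a b; rewrite !mxE; apply: eq_bigr => k _; congr (_ * _).
ring.
Qed.

Lemma intertwine (R : numFieldType) (X Y M : 'M[R]_6) (p : {poly R}) :
  X *m M = M *m Y -> horner_mx X p *m M = M *m horner_mx Y p.
Proof.
move=> e; elim/poly_ind: p => [|p c IH].
  by rewrite !rmorph0 mul0mx mulmx0.
rewrite !rmorphD !rmorphM /= !horner_mx_X !horner_mx_C -!mulmxE.
by rewrite mulmxDl mulmxDr -mulmxA e mulmxA IH -mulmxA scalar_mxC.
Qed.

Lemma horner_tr (R : numFieldType) (X : 'M[R]_6) (p : {poly R}) :
  (horner_mx X p)^T = horner_mx X^T p.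
Proof.
elim/poly_ind: p => [|p c IH].
  by rewrite !rmorph0 trmx0.
rewrite [p * 'X]mulrC !rmorphD !rmorphM /= !horner_mx_X !horner_mx_C -!mulmxE.
rewrite trD trmx_mul IH tr_scalar_mx.
congr (_ + _); exact: intertwine.
Qed.

Unset Implicit Arguments. Set Strict Implicit.

Theorem mainTheorem11 (R : numFieldType) (A : 'M[R]_6) (c0 c1 c2 : cubic R)
  (l1 l2 l3 : R) (p1 p2 p3 : {poly R})
  (* A skew-Hamiltonian *)
  (hA : A^T *m Jmx R = Jmx R *m A)
  (* A Hess H0(x) = Hess H0(x) A^T *)
  (hH0 : forall x, A *m cubic_hess c0 x = cubic_hess c0 x *m A^T)
  (* grad H1 = A grad H0, grad H2 = A grad H1 *)
  (hH1 : forall x, cubic_grad c1 x = A *m cubic_grad c0 x)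
  (hH2 : forall x, cubic_grad c2 x = A *m cubic_grad c1 x)
  (* genericity *)
  (hchar : char_poly A = (('X - l1%:P) * ('X - l2%:P) * ('X - l3%:P)) ^+ 2)
  (hl12 : l1 != l2) (hl13 : l1 != l3) (hl23 : l2 != l3)
  (* interpolation polynomials defining B_i = p_i(A) *)
  (hp1 : [/\ (size p1 <= 3)%N, p1.[l1] = -1, p1.[l2] = 1 & p1.[l3] = 1])
  (hp2 : [/\ (size p2 <= 3)%N, p2.[l1] = 1, p2.[l2] = -1 & p2.[l3] = 1])
  (hp3 : [/\ (size p3 <= 3)%N, p3.[l1] = 1, p3.[l2] = 1 & p3.[l3] = -1])
  (x : 'cV[R]_6) (eps : R) (heps : eps != 0)
  (* points where all the rational functions are defined *)
  (hinvH : (1%:M - eps *: vf_jac c0 x) \in unitmx)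
  (hinv1 : (1%:M - eps *: gvf_jac (horner_mx A p1) c0 x) \in unitmx)
  (hinv2 : (1%:M - eps *: gvf_jac (horner_mx A p2) c0 x) \in unitmx)
  (hinv3 : (1%:M - eps *: gvf_jac (horner_mx A p3) c0 x) \in unitmx) :
  Ktilde (horner_mx A p1) c0 x eps + Ktilde (horner_mx A p2) c0 x eps
    + Ktilde (horner_mx A p3) c0 x eps = Htilde c0 x eps.
Proof.
have mz := @minpoly_zero R A (Jmx R) l1 l2 l3 (Ju R) (Jsk R) hA hchar hl12 hl13 hl23.
set S := cubic_hess c0 x.
have Ssym : S^T = S by exact: hess_sym.
have props : forall p : {poly R}, (p.[l1] = 1 \/ p.[l1] = -1) ->
   (p.[l2] = 1 \/ p.[l2] = -1) -> (p.[l3] = 1 \/ p.[l3] = -1) ->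
   [/\ horner_mx A p *m horner_mx A p = 1%:M,
       (horner_mx A p)^T *m Jmx R = Jmx R *m horner_mx A p &
       horner_mx A p *m S = S *m (horner_mx A p)^T].
  move=> p e1 e2 e3; split.
  - have h : horner_mx A (p * p - 1) = 0.
      apply: mz; rewrite !hornerE;
        [case: e1 => -> | case: e2 => -> | case: e3 => ->];
        by rewrite ?mulrNN mulr1 subrr.
    move: h; rewrite rmorphB rmorphM rmorph1 /= => /eqP; rewrite subr_eq0.
    by move/eqP.
  - by rewrite horner_tr; apply: intertwine.
  - by rewrite horner_tr; apply: intertwine; exact: hH0.
case: hp1 => _ a1 b1 c1'; case: hp2 => _ a2 b2 c2'; case: hp3 => _ a3 b3 c3'.
have [BB1 BJ1 BS1] := props p1 (or_intror a1) (or_introl b1) (or_introl c1').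
have [BB2 BJ2 BS2] := props p2 (or_introl a2) (or_intror b2) (or_introl c2').
have [BB3 BJ3 BS3] := props p3 (or_introl a3) (or_introl b3) (or_intror c3').
have hsum : horner_mx A p1 + horner_mx A p2 + horner_mx A p3 = 1%:M.
  have h : horner_mx A (p1 + p2 + p3 - 1) = 0.
    apply: mz; rewrite !hornerE ?a1 ?b1 ?c1' ?a2 ?b2 ?c2' ?a3 ?b3 ?c3';
      [by rewrite addNr add0r subrr | by rewrite subrr add0r subrr |
       by rewrite addrK subrr].
  move: h; rewrite !rmorphD rmorphN rmorph1 /= => /eqP; rewrite subr_eq0.
  by move/eqP.
rewrite /Ktilde /Htilde /kahan_mod /gvf_jac /vf_jac.
rewrite (key x (Jsk R) (JJ R) Ssym BB1 BJ1 BS1 hinvH hinv1).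
rewrite (key x (Jsk R) (JJ R) Ssym BB2 BJ2 BS2 hinvH hinv2).
rewrite (key x (Jsk R) (JJ R) Ssym BB3 BJ3 BS3 hinvH hinv3).
rewrite -!mulrDr -!qD -!mulmxDr -!trD hsum trmx1 mulmx1 mulmxA.
done.
Qed.
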